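(* For each $s\in\{0,\dots,r-3\}$, both $m^sf^{\underline1}\circ\mathcal{T}_r$ and its discrete Fourier transform belong to $\mathcal{V}_s$. Every element of $\mathcal{V}_s$ is a $2P$-periodic function with mean value zero, even or odd according as $r-s$ is even or odd. Moreover $\mathcal{V}_s$ is stable under the discrete Fourier transform.
   Context: $r\ge3$; $p_1,\dots,p_r$ positive pairwise coprime, $p_2,\dots,p_r$ odd; $P=p_1\cdots p_r$, $\hat p_j=P/p_j$; $E=\{\pm1\}^r$. $\mathfrak{H}$: $\underline h\in\mathbb{Z}^r$, $0\le h_j\le p_j$, $h_j/p_j\notin\mathbb{Z}$ for at least three $j$; $\mathfrak{L}$: those with $h_j$ even for $j\ge2$. $J^{\underline h}=\{j:p_j\mid h_j\}$; $\mathcal{N}^{\underline h}(\underline\varepsilon)=P+\sum_j\varepsilon_jh_j\hat p_j$; $\mathfrak{S}^{\underline h}=\mathcal{N}^{\underline h}(E)+2P\mathbb{Z}$. For $J\cap J^{\underline h}=\emptyset$: $g_J^{\underline h}(n)=\prod_{j\in J}\varepsilon_j$ if $n\equiv\mathcal{N}^{\underline h}(\underline\varepsilon)\bmod2P$ for some $\underline\varepsilon\in E$, else $0$. $\mathcal{V}_s:=\mathrm{span}_{\mathbb{C}}\{g_J^{\underline\ell}: J\subset\{1,\dots,r\},\ |J|\ge r-s,\ |J|\equiv r-s\bmod2,\ \underline\ell\in\mathfrak{L},\ J^{\underline\ell}\cap J=\emptyset\}$. $m^sf^{\underline1}(n)=-\varepsilon_1\cdots\varepsilon_r(\sum_j\varepsilon_j\hat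 p_j)^s$ if $n\equiv\mathcal{N}^{\underline1}(\underline\varepsilon)\bmod2P$ (unique $\underline\varepsilon$), else $0$ (here $\underline1=(1,\dots,1)$). $\mathcal{T}_r(m)=m$ ($r$ odd), $m-P$ ($r$ even). DFT: $\hat f(n)=(2P)^{-1/2}\sum_{\ell\bmod2P}e^{-2\pi i\ell n/(2P)}f(\ell)$. *)

(* Defs.v *)
From HB Require Import structures.
From mathcomp Require Import all_boot all_order all_algebra all_field.
Set Implicit Arguments. Unset Strict Implicit. Unset Printing Implicit Defensive.
Import Order.TTheory GRing.Theory Num.Theory.
Local Open Scope ring_scope.

(* Indices are 0-based: j : 'I_r stands for the paper's index j+1.
   Signs: eps : {ffun 'I_r -> bool}, with true meaning -1 and false meaning +1. *)

Definition Pp r (p : 'I_r -> nat) : nat := (\prod_(j < r) p j)%N.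
Definition phat r (p : 'I_r -> nat) (j : 'I_r) : nat := (Pp p %/ p j)%N.
Definition sgnz (b : bool) : int := if b then -1 else 1.

Definition Nh r (p : 'I_r -> nat) (h : 'I_r -> nat) (e : {ffun 'I_r -> bool}) : int :=
  (Pp p)%:Z + \sum_(j < r) sgnz (e j) * (h j * phat p j)%N%:Z.

Definition congN r (p : 'I_r -> nat) (h : 'I_r -> nat) (n : int) (e : {ffun 'I_r -> bool}) : bool :=
  (n == Nh p h e %[mod (2 * Pp p)%N%:Z])%Z.

Definition Jh r (p : 'I_r -> nat) (h : 'I_r -> nat) : {set 'I_r} := [set j | (p j %| h j)%N].

Definition inH r (p : 'I_r -> nat) (h : 'I_r -> nat) : bool :=
  [forall j, (h j <= p j)%N] && (3 <= #|[set j | ~~ (p j %| h j)%N]|)%N.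

Definition inL r (p : 'I_r -> nat) (h : 'I_r -> nat) : bool :=
  inH p h && [forall j : 'I_r, (0 < (j : nat))%N ==> ~~ odd (h j)].

(* g_J^h(n) (the product over J is independent of the choice of eps when J and J^h are disjoint) *)
Definition gJ r (p : 'I_r -> nat) (J : {set 'I_r}) (h : 'I_r -> nat) (n : int) : algC :=
  match [pick e | congN p h n e] with
  | Some e => \prod_(j in J) (sgnz (e j))%:~R
  | None => 0
  end.

Definition Vgen r (p : 'I_r -> nat) (s : nat) (J : {set 'I_r}) (l : {ffun 'I_r -> nat}) : bool :=
  [&& (r - s <= #|J|)%N, odd #|J| == odd (r - s), inL p l & [disjoint J & Jh p l]].

Definition inV r (p : 'I_r -> nat) (s : nat) (f : int -> algC) : Prop :=
  exists gs : seq (algC * {set 'I_r} * {ffun 'I_r -> nat}),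
    all (fun x => Vgen p s x.1.2 x.2) gs /\
    forall n, f n = \sum_(x <- gs) x.1.1 * gJ p x.1.2 x.2 n.

Definition one_vec r : 'I_r -> nat := fun _ => 1%N.

Definition msf r (p : 'I_r -> nat) (s : nat) (n : int) : algC :=
  if #|[set e | congN p (@one_vec r) n e]| == 1%N then
    match [pick e | congN p (@one_vec r) n e] with
    | Some e => - (\prod_(j < r) (sgnz (e j))%:~R) *
                 (\sum_(j < r) (sgnz (e j))%:~R * (phat p j)%:R) ^+ s
    | None => 0
    end
  else 0.

Definition Tr r (p : 'I_r -> nat) (m : int) : int :=
  if odd r then m else m - (Pp p)%:Z.

(* zeta = P.-root (-1) = exp(i pi / P) = exp(2 pi i / (2P)) (principal root, minimal argument) *)
Definition zeta r (p : 'I_r -> nat) : algC := (Pp p).-root (-1).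

Definition dft r (p : 'I_r -> nat) (f : int -> algC) (n : int) : algC :=
  (sqrtC (2 * Pp p)%N%:R)^-1 *
  \sum_(l < (2 * Pp p)%N) zeta p ^ (- ((l : nat)%:Z * n)) * f (l : nat)%:Z.

(* Main.v *)
Require Import Defs.
From HB Require Import structures.
From mathcomp Require Import all_boot all_order all_algebra all_field.
From mathcomp Require Import ring lra zify.
Import Order.TTheory GRing.Theory Num.Theory.
Set Implicit Arguments. Unset Strict Implicit. Unset Printing Implicit Defensive.
Local Open Scope ring_scope.

Definition cg (d a b : int) : bool := (d %| a - b)%Z.

Lemma cgE d a b : cg d a b = (a == b %[mod d])%Z.
Proof. by rewrite /cg eqz_mod_dvd. Qed.
Lemma cg_refl d a : cg d a a.
Proof. by rewrite /cg subrr dvdz0. Qed.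
Lemma cg_sym d a b : cg d a b -> cg d b a.
Proof. by rewrite /cg => h; rewrite -opprB rpredN. Qed.
Lemma cg_trans d a b c : cg d a b -> cg d b c -> cg d a c.
Proof. by rewrite /cg => h1 h2; rewrite -(subrKA b) rpredD. Qed.
Lemma cg_add d a b c e : cg d a b -> cg d c e -> cg d (a + c) (b + e).
Proof. by rewrite /cg opprD addrACA => h1 h2; rewrite rpredD. Qed.
Lemma cg_opp d a b : cg d a b -> cg d (- a) (- b).
Proof. by rewrite /cg => h; rewrite -opprD rpredN. Qed.
Lemma cg_mul d a b c e : cg d a b -> cg d c e -> cg d (a * c) (b * e).
Proof.
rewrite /cg => h1 h2.
have -> : a * c - b * e = (a - b) * c + b * (c - e) by ring.
by apply: rpredD; [exact: dvdz_mulr | exact: dvdz_mull].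
Qed.
Lemma cg_dvd d d' a b : (d' %| d)%Z -> cg d a b -> cg d' a b.
Proof. by rewrite /cg => h1 h2; apply: dvdz_trans h2. Qed.
Lemma cg0 d a : (d %| a)%Z -> cg d a 0.
Proof. by rewrite /cg subr0. Qed.
Lemma cg_sum d (I : finType) (F G : I -> int) :
  (forall i, cg d (F i) (G i)) -> cg d (\sum_i F i) (\sum_i G i).
Proof.
move=> h; rewrite /cg -sumrB; apply: rpred_sum => i _; exact: h.
Qed.
Section Main.
Variable r : nat.
Variable p : 'I_r -> nat.
Hypothesis r3 : (3 <= r)%N.
Hypothesis ppos : forall j, (0 < p j)%N.
Hypothesis pcop : forall i j : 'I_r, i != j -> coprime (p i) (p j).
Hypothesis podd : forall j : 'I_r, (0 < (j : nat))%N -> odd (p j).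

Local Notation P := (Pp p).
Local Notation M := (2 * Pp p)%N.

Lemma PpE j : Pp p = (p j * \prod_(k | k != j) p k)%N.
Proof. by rewrite /Pp (bigD1 j). Qed.
Lemma phatE j : phat p j = (\prod_(k | k != j) p k)%N.
Proof. by rewrite /phat (PpE j) mulKn. Qed.
Lemma pP j : P = (p j * phat p j)%N.
Proof. by rewrite phatE -PpE. Qed.
Lemma P_pos : (0 < P)%N.
Proof. by rewrite /Pp prodn_gt0. Qed.
Lemma M_pos : (0 < M)%N.
Proof. by rewrite muln_gt0 P_pos. Qed.
Lemma phat_pos j : (0 < phat p j)%N.
Proof. by rewrite phatE prodn_gt0. Qed.
Lemma dvd_p_phat i j : i != j -> (p i %| phat p j)%N.
Proof. by move=> ij; rewrite phatE (bigD1 i) //=; apply: dvdn_mulr. Qed.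
Lemma dvd_p_P j : (p j %| P)%N.
Proof. by rewrite (pP j); apply: dvdn_mulr. Qed.
Lemma cop_p_phat j : coprime (p j) (phat p j).
Proof.
rewrite phatE; apply: (big_ind (fun x => coprime (p j) x)) => //.
- exact: coprimen1.
- by move=> x y h1 h2; rewrite coprimeMr h1.
- by move=> i ij; apply: pcop; rewrite eq_sym.
Qed.

Definition q (j : 'I_r) : nat := if (j : nat) == 0%N then (2 * p j)%N else p j.

Lemma q_pos j : (0 < q j)%N.
Proof. by rewrite /q; case: ifP; rewrite ?muln_gt0 ppos. Qed.
Lemma q_dvd j : (q j %| 2 * p j)%N.
Proof. by rewrite /q; case: ifP => _; [exact: dvdnn | exact: dvdn_mull]. Qed.
Lemma q_half j x : (q j %| 2 * x)%N -> (p j %| x)%N.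
Proof.
rewrite /q; case: ifP => [_|j0]; first by rewrite dvdn_pmul2l.
by rewrite Gauss_dvdr // coprime_sym coprime2n podd // lt0n j0.
Qed.
Lemma p_dvd_q j : (p j %| q j)%N.
Proof. by rewrite /q; case: ifP => _; rewrite ?dvdn_mull ?dvdnn. Qed.
Lemma qcop i j : i != j -> coprime (q i) (q j).
Proof.
move=> ij; rewrite /q.
case: ifP => i0; case: ifP => j0.
- by case/eqP: ij; apply: val_inj; rewrite /= (eqP i0) (eqP j0).
- by rewrite coprimeMl pcop // andbT coprime2n podd // lt0n j0.
- by rewrite coprimeMr pcop // andbT coprime_sym coprime2n podd // lt0n i0.
- exact: pcop.
Qed.

Definition i0 : 'I_r := Ordinal (leq_trans (isT : (0 < 3)%N) r3).

Lemma prod_q : (\prod_j q j)%N = M.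
Proof.
rewrite (eq_bigr (fun j => (if j == i0 then 2 else 1) * p j)%N); last first.
  move=> j _; rewrite /q; have -> : ((j : nat) == 0%N) = (j == i0) by [].
  by case: ifP; rewrite ?mul1n.
rewrite big_split /= (bigD1 i0) //= big1 ?muln1 // => j /negbTE -> //.
Qed.

Lemma dvd_prod_q (s : seq 'I_r) n : uniq s -> (forall k, q k %| n)%N ->
  (\prod_(k <- s) q k %| n)%N.
Proof.
elim: s => [|a s IH] /=; first by rewrite big_nil dvd1n.
case/andP=> aS us h; rewrite big_cons Gauss_dvd ?h ?IH //.
rewrite big_seq; apply: (big_ind (fun x => coprime (q a) x)) => //.
- exact: coprimen1.
- by move=> x y h1 h2; rewrite coprimeMr h1.
- by move=> i iS; apply: qcop; apply: contraNneq aS => ->.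
Qed.


Lemma CRT a b : (forall k, cg (q k)%:Z a b) -> cg M%:Z a b.
Proof.
move=> h; rewrite /cg dvdzE /= -prod_q -big_enum /=.
apply: dvd_prod_q; first exact: enum_uniq.
by move=> k; have := h k; rewrite /cg dvdzE.
Qed.

Definition mq (j : 'I_r) : nat := (\prod_(i | i != j) q i)%N.
Lemma mqE j : (q j * mq j)%N = M.
Proof. by rewrite /mq -prod_q [RHS](bigD1 j). Qed.
Lemma cop_q_mq j : coprime (q j) (mq j).
Proof.
apply: (big_ind (fun x => coprime (q j) x)) => //.
- exact: coprimen1.
- by move=> x y h1 h2; rewrite coprimeMr h1.
- by move=> i ij; apply: qcop; rewrite eq_sym.
Qed.
Lemma q_mq k j : k != j -> (q k %| mq j)%N.
Proof. by move=> kj; rewrite /mq (bigD1 k) //; apply: dvdn_mulr. Qed.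

Definition E (j : 'I_r) : nat := chinese (q j) (mq j) 1 0.
Lemma E_q j : cg (q j)%:Z (E j)%:Z 1.
Proof. by rewrite cgE modz_nat (modz_nat 1) chinese_modl // cop_q_mq. Qed.
Lemma E_mq j : (mq j %| E j)%N.
Proof. by rewrite /dvdn /E chinese_modr ?mod0n // cop_q_mq. Qed.
Lemma E_other k j : k != j -> ((q k)%:Z %| (E j)%:Z)%Z.
Proof. by move=> kj; rewrite dvdzE; exact: (dvdn_trans (q_mq kj) (E_mq j)). Qed.

Definition fx (s t : {ffun 'I_r -> bool}) : {ffun 'I_r -> bool} :=
  [ffun j => s j (+) t j].
Definition zer : {ffun 'I_r -> bool} := [ffun _ => false].
Definition one : {ffun 'I_r -> bool} := [ffun _ => true].

Lemma sgnzX a b : sgnz (a (+) b) = sgnz a * sgnz b.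
Proof. by case: a; case: b. Qed.
Lemma sgnz_sq a : sgnz a * sgnz a = 1.
Proof. by case: a. Qed.

Definition u (s : {ffun 'I_r -> bool}) : int := \sum_j sgnz (s j) * (E j)%:Z.

Lemma u_q s k : cg (q k)%:Z (u s) (sgnz (s k)).
Proof.
rewrite /u (bigD1 k) //= -[X in cg _ _ X]addr0; apply: cg_add.
  by rewrite -[X in cg _ _ X]mulr1; apply: cg_mul; [apply: cg_refl| apply: E_q].
apply: cg0; apply: rpred_sum => j jk; apply: dvdz_mull; apply: E_other.
by rewrite eq_sym.
Qed.

Lemma cg_sign d a b x : (d %| 2 * x)%Z -> cg d (sgnz a * x) (sgnz b * x).
Proof.
move=> h; rewrite /cg; case: a; case: b => /=; rewrite ?subrr ?dvdz0 //.
- have -> : -1 * x - 1 * x = - (2 * x) by ring.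
  by rewrite rpredN.
- by have -> : 1 * x - -1 * x = (2 * x) by ring.
Qed.

Lemma q_2P k : ((q k)%:Z %| 2 * P%:Z)%Z.
Proof.
rewrite -PoszM dvdzE /=; apply: dvdn_trans (q_dvd k) _.
by rewrite dvdn_pmul2l // dvd_p_P.
Qed.

Lemma u_mul s t : cg M%:Z (u s * u t) (u (fx s t)).
Proof.
apply: CRT => k; apply: cg_trans (cg_mul (u_q s k) (u_q t k)) _.
by apply: cg_sym; rewrite -sgnzX; have := u_q (fx s t) k; rewrite ffunE.
Qed.
Lemma u_zer : cg M%:Z (u zer) 1.
Proof. by apply: CRT => k; have := u_q zer k; rewrite ffunE. Qed.
Lemma u_one : cg M%:Z (u one) (-1).
Proof. by apply: CRT => k; have := u_q one k; rewrite ffunE. Qed.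
Lemma fx_ss s : fx s s = zer.
Proof. by apply/ffunP => j; rewrite !ffunE addbb. Qed.
Lemma fxC s t : fx s t = fx t s.
Proof. by apply/ffunP => j; rewrite !ffunE addbC. Qed.
Lemma fxA s t w : fx s (fx t w) = fx (fx s t) w.
Proof. by apply/ffunP => j; rewrite !ffunE addbA. Qed.
Lemma fxK s t : fx s (fx s t) = t.
Proof. by apply/ffunP => j; rewrite !ffunE addKb. Qed.
Lemma fx_inj s : injective (fx s).
Proof. by move=> a b h; rewrite -(fxK s a) h fxK. Qed.
Lemma u_sq s : cg M%:Z (u s * u s) 1.
Proof. by apply: cg_trans (u_mul s s) _; rewrite fx_ss u_zer. Qed.
Lemma u_P s : cg M%:Z (u s * P%:Z) P%:Z.
Proof.
apply: CRT => k; apply: cg_trans (cg_mul (u_q s k) (cg_refl _ P%:Z)) _.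
rewrite -{2}[P%:Z]mul1r -[1]/(sgnz false); apply: cg_sign; exact: q_2P.
Qed.

Lemma u_N s (h : 'I_r -> nat) e : cg M%:Z (u s * Nh p h e) (Nh p h (fx s e)).
Proof.
apply: CRT => k; apply: cg_trans (cg_mul (u_q s k) (cg_refl _ _)) _.
rewrite /Nh mulrDr; apply: cg_add.
  rewrite -{2}[P%:Z]mul1r -[1]/(sgnz false); apply: cg_sign; exact: q_2P.
rewrite mulr_sumr; apply: cg_sum => j; rewrite ffunE sgnzX -mulrA.
have [->|jk] := eqVneq j k; first exact: cg_refl.
apply: cg_sign; rewrite mulrCA; apply: dvdz_mull.
rewrite -PoszM dvdzE /=; apply: dvdn_trans (q_dvd k) _.
rewrite dvdn_pmul2l //; apply: dvdn_mull; apply: dvd_p_phat.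
by rewrite eq_sym.
Qed.

Lemma N_p (h : 'I_r -> nat) e j :
  cg (p j)%:Z (Nh p h e) (sgnz (e j) * (h j * phat p j)%N%:Z).
Proof.
rewrite /Nh (bigD1 j) //= addrCA -[X in cg _ _ X]addr0.
apply: cg_add; first exact: cg_refl.
apply: cg0; apply: rpredD.
  by rewrite dvdzE /= dvd_p_P.
apply: rpred_sum => i ij; apply: dvdz_mull; rewrite dvdzE /=.
by apply: dvdn_mull; apply: dvd_p_phat; rewrite eq_sym.
Qed.

Lemma cgM_u s a b : cg M%:Z a b -> cg M%:Z (u s * a) (u s * b).
Proof. by move=> h; apply: cg_mul => //; apply: cg_refl. Qed.

Lemma cg_uu s a : cg M%:Z (u s * (u s * a)) a.
Proof.
rewrite mulrA -[X in cg _ _ X]mul1r; apply: cg_mul; [exact: u_sq | exact: cg_refl].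
Qed.

Lemma W_eq (h : 'I_r -> nat) e t j :
  cg M%:Z (Nh p h e) (Nh p h t) -> ~~ (p j %| h j)%N -> e j = t j.
Proof.
move=> het ndv; apply/eqP/negPn/negP => ne.
have sj : (fx e t) j = true by rewrite ffunE; move: ne; case: (e j); case: (t j).
have h1 : cg M%:Z (u (fx e t) * Nh p h t) (Nh p h t).
  apply: (cg_trans (u_N (fx e t) h t)).
  have -> : fx (fx e t) t = e by apply/ffunP => i; rewrite !ffunE addbK.
  exact: het.
have h2 : cg (q j)%:Z (- Nh p h t) (Nh p h t).
  apply: cg_trans (cg_dvd _ h1); last by rewrite dvdzE /= -(mqE j) dvdn_mulr.
  rewrite -mulN1r; apply: cg_mul; last exact: cg_refl.
  by apply: cg_sym; have := u_q (fx e t) j; rewrite sj.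
have h3 : ((p j)%:Z %| Nh p h t)%Z.
  move: h2; rewrite /cg -opprD rpredN dvdzE => h2.
  apply: q_half; move: h2.
  have -> : (Nh p h t + Nh p h t) = 2 * Nh p h t by ring.
  move=> hh; have : ((q j)%:Z %| 2 * Nh p h t)%Z := hh.
  by rewrite dvdzE abszM.
have h4 := cg_trans (cg_sym (cg0 h3)) (N_p h t j).
move: h4; rewrite /cg sub0r rpredN => h4.
have h5 : ((p j)%:Z %| (h j * phat p j)%N%:Z)%Z.
  by move: h4; rewrite !dvdzE abszM; case: (t j) => /=; rewrite mul1n.
move: h5; rewrite dvdzE /= Gauss_dvdl ?cop_p_phat // => h5.
by rewrite h5 in ndv.
Qed.

Definition chi (J : {set 'I_r}) (s : {ffun 'I_r -> bool}) : algC :=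
  \prod_(j in J) (sgnz (s j))%:~R.

Lemma chi_fx J s t : chi J (fx s t) = chi J s * chi J t.
Proof.
by rewrite /chi -big_split; apply: eq_bigr => j _; rewrite ffunE sgnzX intrM.
Qed.

Lemma W_chi (h : 'I_r -> nat) (J : {set 'I_r}) e t :
  [disjoint J & Jh p h] -> cg M%:Z (Nh p h e) (Nh p h t) -> chi J e = chi J t.
Proof.
move=> dis het; apply: eq_bigr => j jJ; rewrite (W_eq het) //.
by apply/negP => hj; move: (disjointFr dis jJ); rewrite inE hj.
Qed.

Lemma congN_cg (h : 'I_r -> nat) n e : congN p h n e = cg M%:Z n (Nh p h e).
Proof. by rewrite /congN cgE. Qed.

Lemma gJ_mod (J : {set 'I_r}) (h : 'I_r -> nat) a b : cg M%:Z a b -> gJ p J h a = gJ p J h b.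
Proof.
move=> hab; rewrite /gJ; rewrite (@eq_pick _ _ (congN p h b)) //.
move=> e; rewrite !congN_cg; apply/idP/idP => h1.
  exact: cg_trans (cg_sym hab) h1.
exact: cg_trans hab h1.
Qed.

Lemma gJ_u (J : {set 'I_r}) (h : 'I_r -> nat) s n : [disjoint J & Jh p h] ->
  gJ p J h (u s * n) = chi J s * gJ p J h n.
Proof.
move=> dis; rewrite /gJ; case: pickP => [e He|Hn]; case: pickP => [e' He'|H'] //.
- rewrite -chi_fx; apply: (@W_chi h) => //.
  move: He He'; rewrite !congN_cg => He He'.
  exact: (cg_trans (cg_sym He) (cg_trans (cgM_u s He') (u_N s h e'))).
- move: (H' (fx s e)); rewrite !congN_cg => /negP; case.
  move: He; rewrite congN_cg => He.
  apply: cg_trans (cg_sym (cg_uu s n)) _.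
  exact: (cg_trans (cgM_u s He) (u_N _ _ _)).
- move: (Hn (fx s e')); rewrite !congN_cg => /negP; case.
  move: He'; rewrite congN_cg => He'.
  exact: (cg_trans (cgM_u s He') (u_N _ _ _)).
- by rewrite mulr0.
Qed.

Lemma chi_mk J s : chi J s = \prod_j (if j \in J then (sgnz (s j))%:~R else 1).
Proof. by rewrite /chi big_mkcond. Qed.

Lemma sgC_sq (b : bool) : (sgnz b)%:~R * (sgnz b)%:~R = 1 :> algC.
Proof. by rewrite -intrM sgnz_sq. Qed.

Lemma chi_orth J K : \sum_s chi J s * chi K s = if J == K then 2 ^+ r else 0 :> algC.
Proof.
pose F j (b : bool) : algC := (if j \in J then (sgnz b)%:~R else 1) *
                              (if j \in K then (sgnz b)%:~R else 1).
transitivity (\sum_(s : {ffun 'I_r -> bool}) \prod_j F j (s j)).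
  by apply: eq_bigr => s _; rewrite !chi_mk -big_split.
rewrite -bigA_distr_bigA /=.
have hF j : \sum_b F j b = if (j \in J) == (j \in K) then 2 else 0.
  rewrite big_bool /F /=.
  by case: (j \in J); case: (j \in K) => /=; ring.
case: eqP => [eJK|neq].
  rewrite (eq_bigr (fun _ => 2)); first by rewrite prodr_const card_ord.
  by move=> j _; rewrite hF eJK eqxx.
have [j hj] : exists j, (j \in J) != (j \in K).
  case: (boolP [exists j, (j \in J) != (j \in K)]) => [/existsP //|/existsPn hn].
  case: neq; by apply/setP => j; move: (hn j); rewrite negbK => /eqP.
by rewrite (bigD1 j) //= hF (negbTE hj) mul0r.
Qed.

Lemma sum_chi_sets s : \sum_(J : {set 'I_r}) chi J s = if s == zer then 2 ^+ r else 0.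
Proof.
have := (@bigA_distr _ 0 1 *%R +%R 'I_r (fun j => (sgnz (s j))%:~R) (fun _ => 1)).
move=> h.
transitivity (\sum_(J in {set 'I_r}) \prod_i (if i \in J then (sgnz (s i))%:~R else 1) : algC).
  by apply: eq_bigr => J _; rewrite chi_mk.
rewrite -h.
case: eqP => [->|neq].
  rewrite (eq_bigr (fun _ => 2)); first by rewrite prodr_const card_ord.
  by move=> j _; rewrite ffunE /=.
have [j hj] : exists j, s j.
  case: (boolP [exists j, s j]) => [/existsP //|/existsPn hn].
  case: neq; by apply/ffunP => j; rewrite ffunE; move: (hn j) => /negbTE.
by rewrite (bigD1 j) //= hj /= addNr mul0r.
Qed.

Lemma chi_zer J : chi J zer = 1.
Proof. by rewrite /chi big1 // => j _; rewrite ffunE. Qed.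
Lemma chi_one J : chi J one = (-1) ^+ #|J|.
Proof.
by rewrite /chi (eq_bigr (fun _ => -1)) ?prodr_const // => j _; rewrite ffunE.
Qed.

Definition tog (U : {set 'I_r}) j := if j \in U then U :\ j else j |: U.
Lemma togK j : involutive (tog ^~ j).
Proof.
move=> U; rewrite /tog; case jU: (j \in U).
  by rewrite setD11 setD1K.
by rewrite setU11 setU1K // jU.
Qed.
Lemma chi_tog U j s : chi (tog U j) s = chi U s * (sgnz (s j))%:~R.
Proof.
rewrite /tog /chi; case: ifP => jU.
  by rewrite [in RHS](bigD1 j) //= mulrC mulrA sgC_sq mul1r; apply: eq_bigl => i;
     rewrite !inE andbC.
by rewrite big_setU1 ?jU //= mulrC.
Qed.
Lemma card_tog U j d : (#|tog U j| <= d)%N && (odd #|tog U j| == odd d) ->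
  (#|U| <= d.+1)%N && (odd #|U| == odd d.+1).
Proof.
rewrite /tog; case: ifP => jU.
  rewrite (cardsD1 j U) jU add1n /= => /andP[h1 /eqP h2].
  by rewrite ltnS h1 /= h2 eqxx.
rewrite cardsU1 jU add1n /= => /andP[h1 /eqP h2].
rewrite /= -h2 negbK eqxx andbT; apply: leq_trans (ltnW h1) _; exact: leqnSn.
Qed.

Lemma walsh (c : 'I_r -> algC) d : exists a : {set 'I_r} -> algC,
  (forall T, a T != 0 -> (#|T| <= d)%N && (odd #|T| == odd d)) /\
  forall s : {ffun 'I_r -> bool}, (\sum_j (sgnz (s j))%:~R * c j) ^+ d = \sum_T a T * chi T s.
Proof.
elim: d => [|d [a [ha hv]]].
  exists (fun T => if T == set0 then 1 else 0); split.
    by move=> T; case: (eqVneq T set0) => [-> _|_]; [rewrite cards0 | rewrite eqxx].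
  move=> s; rewrite expr0 (bigD1 set0) //= eqxx mul1r big1 ?addr0.
    by rewrite /chi big_set0.
  by move=> T /negbTE ->; rewrite mul0r.
exists (fun U => \sum_j c j * a (tog U j)); split.
  move=> U; case: (boolP [exists j, a (tog U j) != 0]) => [/existsP[j hj] _|].
    by apply: card_tog; apply: ha; exact: hj.
  move=> /existsPn hn; rewrite big1 ?eqxx // => j _.
  by move: (hn j); rewrite negbK => /eqP ->; rewrite mulr0.
move=> s; rewrite exprSr hv mulr_suml.
under eq_bigr => T _ do rewrite mulr_sumr.
rewrite exchange_big /=.
under [RHS]eq_bigr => U _ do rewrite mulr_suml.
rewrite [RHS]exchange_big /=; apply: eq_bigr => j _.
rewrite [RHS](reindex_inj (inv_inj (togK j))) /=; apply: eq_bigr => T _.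
by rewrite togK chi_tog; ring.
Qed.

Lemma walsh_orth (c : 'I_r -> algC) d (K : {set 'I_r}) :
  ~~ ((#|K| <= d)%N && (odd #|K| == odd d)) ->
  \sum_s chi K s * (\sum_j (sgnz (s j))%:~R * c j) ^+ d = 0.
Proof.
move=> hK; have [a [ha hv]] := walsh c d.
under eq_bigr => s _ do rewrite hv mulr_sumr.
rewrite exchange_big /=.
under eq_bigr => T _ do (under eq_bigr => s _ do rewrite mulrCA; rewrite -mulr_sumr chi_orth).
rewrite (bigD1 K) //= eqxx big1 ?addr0.
  have -> : a K = 0 by apply/eqP; apply: contraNT hK; exact: ha.
  by rewrite mul0r.
by move=> T /negbTE; rewrite eq_sym => ->; rewrite mulr0.
Qed.

Lemma inV0 ss : inV p ss (fun _ => 0).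
Proof. by exists [::]; split => // n; rewrite big_nil. Qed.
Lemma inV_ext ss f g : (forall n, f n = g n) -> inV p ss g -> inV p ss f.
Proof. by move=> e [gs [h1 h2]]; exists gs; split => // n; rewrite e h2. Qed.
Lemma inV_add ss f g : inV p ss f -> inV p ss g -> inV p ss (fun n => f n + g n).
Proof.
move=> [gs [h1 h2]] [gs' [h1' h2']]; exists (gs ++ gs'); split.
  by rewrite all_cat h1 h1'.
by move=> n; rewrite big_cat h2 h2'.
Qed.
Lemma inV_scale ss c f : inV p ss f -> inV p ss (fun n => c * f n).
Proof.
move=> [gs [h1 h2]].
exists [seq (c * x.1.1, x.1.2, x.2) | x <- gs]; split.
  by rewrite all_map.
by move=> n; rewrite big_map h2 mulr_sumr; apply: eq_bigr => x _; rewrite mulrA.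
Qed.
Lemma inV_sum ss (I : finType) (F : I -> int -> algC) :
  (forall i, inV p ss (F i)) -> inV p ss (fun n => \sum_i F i n).
Proof.
move=> h.
suff : forall l : seq I, inV p ss (fun n => \sum_(i <- l) F i n) by apply.
elim=> [|a l IH]; first by apply: inV_ext (inV0 ss) => n; rewrite big_nil.
by apply: inV_ext (inV_add (h a) IH) => n; rewrite big_cons.
Qed.
Lemma inV_gen ss J (h : {ffun 'I_r -> nat}) : Vgen p ss J h -> inV p ss (gJ p J h).
Proof.
move=> hv; exists [:: (1, J, h)]; split; first by rewrite /= hv.
by move=> n; rewrite big_seq1 mul1r.
Qed.

Lemma cg_k d a b k : a - b = k * d -> cg d a b.
Proof. by move=> e; rewrite /cg e dvdz_mull // dvdzz. Qed.

Lemma mq_val j : mq j = if (j : nat) == 0%N then phat p j else (2 * phat p j)%N.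
Proof.
have := mqE j; rewrite /q (pP j); case: ifP => _ h.
  by apply/eqP; rewrite -(eqn_pmul2l (_ : 0 < 2 * p j)%N) ?muln_gt0 ?ppos // h mulnA.
by apply/eqP; rewrite -(eqn_pmul2l (ppos j)) h mulnCA.
Qed.

Lemma repr_l (l : int) : exists (h : {ffun 'I_r -> nat}) (e : {ffun 'I_r -> bool}),
  [/\ forall j, (h j <= p j)%N, forall j : 'I_r, (0 < (j : nat))%N -> ~~ odd (h j)
    & cg M%:Z l (Nh p h e)].
Proof.
pose c j := (E j %/ mq j)%N.
have Ec j : E j = (c j * mq j)%N by rewrite divnK // E_mq.
pose t (j : 'I_r) : int := if (j : nat) == 0%N
  then ((l * (c j)%:Z - (p j)%:Z) %% (2 * (p j)%:Z))%Z
  else 2 * ((l * (c j)%:Z) %% (p j)%:Z)%Z.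
have pj0 (j : 'I_r) : (0 < (p j)%:Z) by rewrite ltz_nat ppos.
have T1 (j : 'I_r) : 0 <= t j < 2 * (p j)%:Z.
  have pz := pj0 j.
  have hd : 2 * (p j)%:Z != 0 by lia.
  have hd' : (p j)%:Z != 0 by lia.
  have hd2 : 0 < 2 * (p j)%:Z by lia.
  rewrite /t; case: ifP => _.
    by apply/andP; split; [exact: modz_ge0 | exact: ltz_pmod].
  have h1 := modz_ge0 (l * (c j)%:Z) hd'.
  have h2 := ltz_pmod (l * (c j)%:Z) pz.
  lia.
have MP (j : 'I_r) : (M%:Z = (phat p j)%:Z * (2 * (p j)%:Z)) by rewrite PoszM (pP j) PoszM; ring.
have T2 (j : 'I_r) : cg M%:Z ((phat p j)%:Z * t j)
    (l * (E j)%:Z - (if (j : nat) == 0%N then P%:Z else 0)).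
  rewrite /t Ec mq_val; case: ifP => _.
    set a := (l * (c j)%:Z - (p j)%:Z); set d := 2 * (p j)%:Z.
    have ha := divz_eq a d.
    apply: (@cg_k _ _ _ (- (a %/ d)%Z)); rewrite (MP j) (pP j).
    have -> : (a %% d)%Z = a - (a %/ d)%Z * d by rewrite {2}ha; ring.
    rewrite /a /d !PoszM; ring.
  set a := (l * (c j)%:Z); set d := (p j)%:Z.
  have ha := divz_eq a d.
  apply: (@cg_k _ _ _ (- (a %/ d)%Z)); rewrite (MP j).
  have -> : (a %% d)%Z = a - (a %/ d)%Z * d by rewrite {2}ha; ring.
  rewrite /a /d !PoszM; ring.
pose e := [ffun j => (p j)%:Z < t j].
pose h := [ffun j => if (p j)%:Z < t j then absz ((2 * (p j)%:Z - t j)%R) else absz (t j)].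
have H1 (j : 'I_r) : (h j <= p j)%N.
  rewrite /h ffunE -lez_nat; have := T1 j; case: ifP => ht ?.
    rewrite gez0_abs; lia.
  rewrite gez0_abs; lia.
have H2 (j : 'I_r) : (0 < (j : nat))%N -> ~~ odd (h j).
  move=> j0; have jn : ((j : nat) == 0%N) = false by lia.
  rewrite /h ffunE; case: ifP => _; rewrite /t jn.
    rewrite (_ : 2 * (p j)%:Z - 2 * _ = 2 * ((p j)%:Z - ((l * (c j)%:Z) %% (p j)%:Z)%Z));
      last by ring.
    by rewrite abszM oddM.
  by rewrite abszM oddM.
have H3 (j : 'I_r) : cg M%:Z (sgnz (e j) * (h j * phat p j)%N%:Z) ((phat p j)%:Z * t j).
  rewrite /e /h !ffunE [Posz (_ * phat p j)]PoszM; have := T1 j; case: ifP => ht ? /=.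
    apply: (@cg_k _ _ _ (-1)); rewrite (MP j) gez0_abs; [ring | lia].
  rewrite gez0_abs; [rewrite mul1r mulrC; exact: cg_refl | lia].
exists h, e; split => //.
apply: cg_sym; rewrite /Nh.
apply: cg_trans (cg_add (cg_refl _ P%:Z) (cg_sum H3)) _.
apply: cg_trans (cg_add (cg_refl _ P%:Z) (cg_sum T2)) _.
rewrite sumrB.
have -> : \sum_(j : 'I_r) (if (j : nat) == 0%N then P%:Z else 0) = P%:Z.
  rewrite (bigD1 i0) //= big1 ?addr0 // => j ji.
  by case: ifP => // /eqP j0; case/eqP: ji; apply: val_inj.
rewrite addrC subrK -mulr_sumr -[X in cg _ _ X]mulr1.
apply: cg_mul; first exact: cg_refl.
apply: cg_trans u_zer; rewrite /u; apply: cg_sum => j; rewrite ffunE mul1r.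
exact: cg_refl.
Qed.

Definition proj (J : {set 'I_r}) (f : int -> algC) n := \sum_s chi J s * f (u s * n).
Definition mper (f : int -> algC) := forall a b, cg M%:Z a b -> f a = f b.
Definition good ss (J : {set 'I_r}) := (r - ss <= #|J|)%N && (odd #|J| == odd (r - ss)).

Lemma cg_eqb d a b c : cg d a b -> cg d a c = cg d b c.
Proof.
move=> h; apply/idP/idP => h1; first exact: cg_trans (cg_sym h) h1.
exact: cg_trans h h1.
Qed.

Lemma cg_eqb_r d a b c : cg d b c -> cg d a b = cg d a c.
Proof.
move=> h; apply/idP/idP => h1; first exact: cg_trans h1 h.
exact: cg_trans h1 (cg_sym h).
Qed.

Lemma cg_u_swap s a b : cg M%:Z (u s * a) b = cg M%:Z a (u s * b).
Proof.
apply/idP/idP => h.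
  exact: cg_trans (cg_sym (cg_uu s a)) (cgM_u s h).
exact: cg_trans (cgM_u s h) (cg_uu s b).
Qed.

Lemma sum_delta (F : int -> algC) x : mper F ->
  \sum_(l < M) F (l : nat)%:Z * (cg M%:Z x (l : nat)%:Z)%:R = F x.
Proof.
move=> hF.
have Mz : (0 < M%:Z) by rewrite ltz_nat M_pos.
have hlt : (absz (x %% M%:Z)%Z < M)%N.
  by rewrite -ltz_nat gez0_abs ?ltz_pmod // modz_ge0 // gt_eqF.
pose l0 : 'I_M := Ordinal hlt.
have hl0 : (l0 : nat)%:Z = (x %% M%:Z)%Z by rewrite /= gez0_abs // modz_ge0 // gt_eqF.
rewrite (bigD1 l0) //= big1 ?addr0.
  have c0 : cg M%:Z x (l0 : nat)%:Z by rewrite cgE hl0 modz_mod.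
  by rewrite c0 mulr1; apply: hF; apply: cg_sym.
move=> l ll0; case: (boolP (cg M%:Z x (l : nat)%:Z)) => hc; last by rewrite mulr0.
case/eqP: ll0; apply: val_inj => /=.
have : (l : nat)%:Z = (l0 : nat)%:Z.
  move: hc; rewrite cgE hl0 => /eqP ->; rewrite modz_small //.
  by rewrite ltz_nat ltn_ord andbT.
by case.
Qed.

Definition Sfun (J : {set 'I_r}) (h : 'I_r -> nat) n :=
  \sum_t chi J t * (cg M%:Z n (Nh p h t))%:R.

Lemma Sfun_gJ (J : {set 'I_r}) (h : 'I_r -> nat) n : [disjoint J & Jh p h] ->
  Sfun J h n = (\sum_t (cg M%:Z (Nh p h t) (Nh p h zer))%:R) * gJ p J h n.
Proof.
move=> dis; rewrite /gJ /Sfun; case: pickP => [e He | Hn]; last first.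
  rewrite mulr0 big1 // => t _.
  by move: (Hn t); rewrite congN_cg => ->; rewrite mulr0.
move: He; rewrite congN_cg => He.
transitivity (\sum_t chi J e * (cg M%:Z (Nh p h t) (Nh p h e))%:R).
  apply: eq_bigr => t _; rewrite (cg_eqb _ He).
  case: (boolP (cg M%:Z (Nh p h e) (Nh p h t))) => ht.
    by rewrite (cg_sym ht) (W_chi dis ht).
  have ht' : cg M%:Z (Nh p h t) (Nh p h e) = false.
    by apply/negbTE; apply: contra ht; apply: cg_sym.
  by rewrite ht' !mulr0.
rewrite -mulr_sumr mulrC; congr (_ * _).
rewrite (reindex_inj (@fx_inj e)); apply: eq_bigr => t _.
congr ((_ : bool)%:R).
have h1 : cg M%:Z (Nh p h e) (u e * Nh p h zer).
  have -> : Nh p h e = Nh p h (fx e zer) by congr Nh; apply/ffunP => i; rewrite !ffunE addbF.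
  exact: cg_sym (u_N _ _ _).
have h2 : cg M%:Z (Nh p h (fx e t)) (u e * Nh p h t) by exact: cg_sym (u_N _ _ _).
rewrite (cg_eqb _ h2) (cg_eqb_r _ h1) cg_u_swap.
by apply: cg_eqb_r; apply: cg_uu.
Qed.

Lemma x_eq0 (x : algC) : x = - x -> x = 0.
Proof.
move=> e; have : x *+ 2 = 0 by rewrite mulr2n {1}e addNr.
by move/eqP; rewrite mulrn_eq0 /= => /eqP.
Qed.

Lemma Sfun_nd (J : {set 'I_r}) (h : 'I_r -> nat) k n :
  k \in J -> (p k %| h k)%N -> Sfun J h n = 0.
Proof.
move=> kJ hk; pose f : {ffun 'I_r -> bool} := [ffun i => i == k].
have hN t : cg M%:Z (Nh p h (fx f t)) (Nh p h t).
  rewrite /Nh; apply: cg_add; first exact: cg_refl.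
  apply: cg_sum => j; rewrite !ffunE.
  have [->|jk] := eqVneq j k; last by rewrite /= cg_refl.
  apply: cg_sign.
  rewrite -PoszM dvdzE /= dvdn_pmul2l // (pP k); apply: dvdn_mul => //.
have chf : chi J f = -1.
  rewrite /chi (bigD1 k) //= big1 ?mulr1; first by rewrite ffunE eqxx.
  by move=> j /andP[_ /negbTE jk]; rewrite ffunE jk.
apply: x_eq0; rewrite /Sfun [LHS](reindex_inj (@fx_inj f)) -sumrN.
apply: eq_bigr => t _; rewrite chi_fx chf (cg_eqb_r _ (hN t)).
by rewrite mulN1r mulNr.
Qed.

Lemma Vgen_ok ss J (h : {ffun 'I_r -> nat}) : (ss + 3 <= r)%N -> good ss J ->
  (forall j, (h j <= p j)%N) -> (forall j : 'I_r, (0 < (j : nat))%N -> ~~ odd (h j)) ->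
  [disjoint J & Jh p h] -> Vgen p ss J h.
Proof.
move=> hs /andP[g1 g2] h1 h2 dis.
rewrite /Vgen g1 g2 dis /= andbT /inL /inH.
apply/andP; split; first (apply/andP; split).
- by apply/forallP => j.
- apply: leq_trans (_ : r - ss <= _)%N; first lia.
  apply: leq_trans g1 _; apply: subset_leq_card; apply/subsetP => j jJ.
  by rewrite inE; apply/negP => hj; move: (disjointFr dis jJ); rewrite inE hj.
- by apply/forallP => j; apply/implyP; exact: h2.
Qed.

Lemma Delta_inV ss (J : {set 'I_r}) l : (ss + 3 <= r)%N -> good ss J ->
  inV p ss (fun n => \sum_s chi J s * (cg M%:Z n (u s * l))%:R).
Proof.
move=> hs gJ0; have [h [e0 [h1 h2 hl]]] := repr_l l.
apply: (@inV_ext _ _ (fun n => chi J e0 * Sfun J h n)).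
  move=> n; rewrite /Sfun mulr_sumr (reindex_inj (@fx_inj e0)).
  apply: eq_bigr => t _.
  have -> : fx e0 t = fx t e0 by rewrite fxC.
  have ht : cg M%:Z (u (fx t e0) * l) (Nh p h t).
    have := cg_trans (cgM_u (fx t e0) hl) (u_N _ _ _).
    by rewrite [fx (fx t e0) e0]fxC [fx t e0]fxC fxK.
  by rewrite (cg_eqb_r _ ht) chi_fx; ring.
case: (boolP [disjoint J & Jh p h]) => dis.
  apply: inV_scale; apply: (@inV_ext _ _ (fun n => _ * gJ p J h n)).
    by move=> n; rewrite Sfun_gJ.
  apply: inV_scale; apply: inV_gen; exact: Vgen_ok.
move: dis; rewrite disjoint_subset => /subsetPn [k kJ kn].
apply: (@inV_ext _ _ (fun _ => 0)); last exact: inV0.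
move=> n; rewrite (@Sfun_nd _ _ k) ?mulr0 //.
by move: kn; rewrite !inE negbK.
Qed.

Lemma proj_inV ss (J : {set 'I_r}) f : (ss + 3 <= r)%N -> good ss J -> mper f ->
  inV p ss (proj J f).
Proof.
move=> hs gJ0 hf.
apply: (@inV_ext _ _ (fun n => \sum_(l < M) f (l : nat)%:Z *
   \sum_s chi J s * (cg M%:Z n (u s * (l : nat)%:Z))%:R)).
  move=> n; rewrite /proj.
  under eq_bigr => s _ do rewrite -(sum_delta (u s * n) hf) mulr_sumr.
  rewrite exchange_big /=; apply: eq_bigr => l _; rewrite mulr_sumr.
  by apply: eq_bigr => s _; rewrite cg_u_swap; ring.
apply: inV_sum => l; apply: inV_scale; exact: Delta_inV.
Qed.

Lemma lemA ss f : (ss + 3 <= r)%N -> mper f ->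
  (forall J, ~~ good ss J -> forall n, proj J f n = 0) -> inV p ss f.
Proof.
move=> hs hf hb.
have key n : \sum_J proj J f n = 2 ^+ r * f n.
  rewrite /proj exchange_big /=.
  under eq_bigr => s _ do rewrite -mulr_suml sum_chi_sets.
  rewrite (bigD1 zer) //= eqxx big1 ?addr0.
    congr (_ * _); apply: hf; rewrite -[X in cg _ _ X]mul1r.
    by apply: cg_mul; [exact: u_zer | exact: cg_refl].
  by move=> s /negbTE ->; rewrite mul0r.
apply: (@inV_ext _ _ (fun n => (2 ^+ r)^-1 * \sum_J proj J f n)).
  move=> n; rewrite key mulrA mulVf ?mul1r //.
  by rewrite expf_neq0 // pnatr_eq0.
apply: inV_scale; apply: inV_sum => J.
case: (boolP (good ss J)) => gJ0; first exact: proj_inV.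
by apply: (@inV_ext _ _ (fun _ => 0)); [move=> n; exact: hb | exact: inV0].
Qed.

Lemma mo_lt x : (absz (x %% M%:Z)%Z < M)%N.
Proof.
have Mz : (0 < M%:Z) by rewrite ltz_nat M_pos.
by rewrite -ltz_nat gez0_abs ?ltz_pmod // modz_ge0 // gt_eqF.
Qed.
Definition mo x : 'I_M := Ordinal (mo_lt x).
Lemma mo_cg x : cg M%:Z (mo x : nat)%:Z x.
Proof.
have Mz : (0 < M%:Z) by rewrite ltz_nat M_pos.
by rewrite cgE /= gez0_abs ?modz_mod // modz_ge0 // gt_eqF.
Qed.
Lemma mo_eq (l : 'I_M) x : cg M%:Z (l : nat)%:Z x -> mo x = l.
Proof.
move=> h; apply: val_inj => /=.
have : cg M%:Z (mo x : nat)%:Z (l : nat)%:Z := cg_trans (mo_cg x) (cg_sym h).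
rewrite cgE modz_small; last by rewrite ltz_nat ltn_ord andbT.
rewrite modz_small; last by rewrite ltz_nat ltn_ord andbT.
by move/eqP => [].
Qed.

Lemma reindex_u s (F : int -> algC) : mper F ->
  \sum_(l < M) F (l : nat)%:Z = \sum_(l < M) F (u s * (l : nat)%:Z).
Proof.
move=> hF.
have inv : involutive (fun l : 'I_M => mo (u s * (l : nat)%:Z)).
  move=> l; apply: mo_eq; apply: cg_sym.
  apply: cg_trans (cgM_u s (mo_cg _)) _; exact: cg_uu.
rewrite (reindex_inj (inv_inj inv)); apply: eq_bigr => l _; apply: hF.
exact: mo_cg.
Qed.

Lemma gen_props ss J (h : {ffun 'I_r -> nat}) : Vgen p ss J h ->
  [/\ mper (gJ p J h), forall s n, gJ p J h (u s * n) = chi J s * gJ p J h n,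
      #|J| = #|J| & odd #|J| = odd (r - ss)].
Proof.
case/and4P => g1 /eqP g2 _ dis; split => //.
- by move=> a b; apply: gJ_mod.
- by move=> s n; apply: gJ_u.
Qed.

Lemma chi_flip (J : {set 'I_r}) k : k \in J -> chi J [ffun i => i == k] = -1.
Proof.
move=> kJ; rewrite /chi (bigD1 k) //= big1 ?mulr1; first by rewrite ffunE eqxx.
by move=> j /andP[_ /negbTE jk]; rewrite ffunE jk.
Qed.

Lemma inV_props ss f : (ss + 3 <= r)%N -> inV p ss f ->
  [/\ mper f, forall J, ~~ good ss J -> forall n, proj J f n = 0,
      \sum_(l < M) f (l : nat)%:Z = 0 & forall n, f (- n) = (-1) ^+ (r - ss) * f n].
Proof.
move=> hs [gs [hall hf]].
have G x : x \in gs -> [/\ good ss x.1.2, [disjoint x.1.2 & Jh p x.2] &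
    forall s n, gJ p x.1.2 x.2 (u s * n) = chi x.1.2 s * gJ p x.1.2 x.2 n].
  move=> hx; have := allP hall x hx; case/and4P => g1 g2 _ dis.
  by split; [rewrite /good g1 g2 | exact: dis | move=> s n; apply: gJ_u].
split.
- move=> a b hab; rewrite !hf; apply: eq_bigr => x _; congr (_ * _).
  exact: gJ_mod.
- move=> K hK n; rewrite /proj.
  under eq_bigr => s _ do rewrite hf mulr_sumr.
  rewrite exchange_big /= big_seq big1 // => x hx.
  have [g1 dis hu] := G x hx.
  rewrite (eq_bigr (fun s => x.1.1 * gJ p x.1.2 x.2 n * (chi K s * chi x.1.2 s)));
    last by move=> s _; rewrite hu; ring.
  rewrite -mulr_sumr chi_orth.
  have -> : (K == x.1.2) = false by apply/negbTE; apply: contraNneq hK => ->.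
  by rewrite mulr0.
- under eq_bigr => l _ do rewrite hf.
  rewrite exchange_big /= big_seq big1 // => x hx.
  have [/andP[g1 _] dis hu] := G x hx.
  rewrite -mulr_sumr.
  have [k kJ] : exists k, k \in x.1.2.
    apply/set0Pn; rewrite -card_gt0; apply: leq_trans g1; lia.
  set S := \sum_(l < M) _.
  suff -> : S = 0 by rewrite mulr0.
  apply: x_eq0; rewrite {1}/S (reindex_u [ffun i => i == k]).
    under eq_bigr => l _ do rewrite hu (chi_flip kJ) mulN1r.
    by rewrite sumrN.
  by move=> a b hab; apply: gJ_mod.
- move=> n; rewrite !hf mulr_sumr big_seq [RHS]big_seq; apply: eq_bigr => x hx.
  have [/andP[g1 /eqP g2] dis hu] := G x hx.
  rewrite mulrCA; congr (_ * _).
  have -> : gJ p x.1.2 x.2 (- n) = gJ p x.1.2 x.2 (u one * n).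
    apply: gJ_mod; rewrite -mulN1r; apply: cg_mul; last exact: cg_refl.
    exact: cg_sym u_one.
  by rewrite hu chi_one -signr_odd g2 signr_odd.
Qed.

Lemma zeta_neq0 : zeta p != 0.
Proof.
apply/eqP => z0; have := rootCK P_pos (-1 : algC).
by rewrite -/(zeta p) z0 expr0n gtn_eqF ?P_pos //= => /eqP; rewrite eq_sym oppr_eq0 oner_eq0.
Qed.
Lemma zeta_M : zeta p ^+ M = 1.
Proof.
by rewrite mulnC exprM /zeta rootCK ?P_pos // expr2 mulrNN mulr1.
Qed.
Lemma zeta_mod a b : cg M%:Z a b -> zeta p ^ a = zeta p ^ b.
Proof.
rewrite /cg => /dvdzP [k hk].
have -> : a = b + M%:Z * k by rewrite mulrC -hk; ring.
rewrite expfzDr ?zeta_neq0 // -exprz_exp -exprnP zeta_M exp1rz mulr1 //.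
Qed.

Lemma dft_mper f : mper (dft p f).
Proof.
move=> a b hab; rewrite /dft; congr (_ * _); apply: eq_bigr => l _.
congr (_ * _); apply: zeta_mod; apply: cg_opp; apply: cg_mul => //.
exact: cg_refl.
Qed.

Lemma dft_u f s n : mper f -> dft p f (u s * n) = dft p (fun m => f (u s * m)) n.
Proof.
move=> hf; rewrite /dft; congr (_ * _).
rewrite (@reindex_u s (fun m => zeta p ^ (- (m * (u s * n))) * f m)); last first.
  move=> a b hab; congr (_ * _); last exact: hf.
  by apply: zeta_mod; apply: cg_opp; apply: cg_mul => //; exact: cg_refl.
apply: eq_bigr => l _; congr (_ * _); apply: zeta_mod; apply: cg_opp.
have -> : u s * (l : nat)%:Z * (u s * n) = (u s * u s) * ((l : nat)%:Z * n) by ring.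
rewrite -[X in cg _ _ X]mul1r; apply: cg_mul; [exact: u_sq | exact: cg_refl].
Qed.

Lemma dft_inV ss f : (ss + 3 <= r)%N -> inV p ss f -> inV p ss (dft p f).
Proof.
move=> hs hv; have [hm hp _ _] := inV_props hs hv.
apply: lemA => //; first exact: dft_mper.
move=> J hJ n; rewrite /proj.
under eq_bigr => s _ do rewrite dft_u //.
rewrite /dft.
transitivity (\sum_s \sum_(l < M) (sqrtC M%:R)^-1 *
   (zeta p ^ (- ((l : nat)%:Z * n)) * (chi J s * f (u s * (l : nat)%:Z)))).
  by apply: eq_bigr => s _; rewrite !mulr_sumr; apply: eq_bigr => l _; ring.
rewrite exchange_big /= big1 // => l _.
by rewrite -!mulr_sumr -/(proj J f (l : nat)%:Z) hp // !mulr0.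
Qed.

Definition Aset m := [set e | congN p (@one_vec r) m e].

Lemma msf_mod ss a b : cg M%:Z a b -> msf p ss a = msf p ss b.
Proof.
move=> hab.
have E1 : congN p (@one_vec r) a =1 congN p (@one_vec r) b.
  by move=> e; rewrite !congN_cg; apply: cg_eqb.
rewrite /msf (eq_pick E1).
have -> : [set e | congN p (@one_vec r) a e] = [set e | congN p (@one_vec r) b e].
  by apply/setP => e; rewrite !inE E1.
by [].
Qed.

Lemma Tr_u s n : cg M%:Z (Tr p (u s * n)) (u s * Tr p n).
Proof.
rewrite /Tr; case: ifP => _; first exact: cg_refl.
rewrite mulrBr; apply: cg_add; first exact: cg_refl.
by apply: cg_opp; apply: cg_sym; apply: u_P.
Qed.

Lemma Aset_u s m : Aset (u s * m) = [set fx s e | e in Aset m].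
Proof.
apply/setP => e; rewrite !inE; apply/idP/imsetP.
  move=> h; exists (fx s e); last by rewrite fxK.
  rewrite inE; move: h; rewrite !congN_cg cg_u_swap => h.
  exact: cg_trans h (u_N _ _ _).
move=> [e0]; rewrite inE => h ->; move: h; rewrite !congN_cg => h.
exact: cg_trans (cgM_u s h) (u_N _ _ _).
Qed.

Definition chiT (t : {ffun 'I_r -> bool}) : algC := \prod_(j < r) (sgnz (t j))%:~R.
Definition Lf (t : {ffun 'I_r -> bool}) : algC :=
  \sum_(j < r) (sgnz (t j))%:~R * (phat p j)%:R.

Lemma msf_val ss m : msf p ss m =
  if #|Aset m| == 1%N then
    (match [pick e | congN p (@one_vec r) m e] with
     | Some e => - chiT e * Lf e ^+ ss | None => 0 end) else 0.
Proof. by []. Qed.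

Lemma msf_uniq ss m e0 : Aset m = [set e0] -> msf p ss m = - chiT e0 * Lf e0 ^+ ss.
Proof.
move=> hA; rewrite msf_val hA cards1 eqxx.
case: pickP => [e He|Hn].
  have : e \in Aset m by rewrite inE.
  by rewrite hA inE => /eqP ->.
have : e0 \in Aset m by rewrite hA set11.
by rewrite inE Hn.
Qed.

Lemma chi_T J t : chi J t * chiT t = chi (~: J) t.
Proof.
rewrite chi_mk (chi_mk (~: J)) /chiT -big_split /=; apply: eq_bigr => j _.
by rewrite inE; case: (j \in J) => /=; rewrite ?sgC_sq ?mul1r.
Qed.

Lemma msf_inV ss : (ss + 3 <= r)%N -> inV p ss (fun n => msf p ss (Tr p n)).
Proof.
move=> hs; apply: lemA => //.
  move=> a b hab; apply: msf_mod; rewrite /Tr; case: ifP => _ //.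
  by apply: cg_add => //; exact: cg_refl.
move=> J hJ n; rewrite /proj; set m := Tr p n.
have h1 s : msf p ss (Tr p (u s * n)) = msf p ss (u s * m) by apply: msf_mod; exact: Tr_u.
under eq_bigr => s _ do rewrite h1.
case: (boolP (#|Aset m| == 1%N)) => hc; last first.
  rewrite big1 // => s _; rewrite msf_val Aset_u card_imset ?(negbTE hc) ?mulr0 //.
  exact: fx_inj.
have [e0 he0] := cards1P hc.
have hs1 s : Aset (u s * m) = [set fx s e0] by rewrite Aset_u he0 imset_set1.
under eq_bigr => s _ do rewrite (msf_uniq ss (hs1 s)).
rewrite (reindex_inj (@fx_inj e0)).
transitivity (- chi J e0 * \sum_t chi (~: J) t * Lf t ^+ ss).
  rewrite mulr_sumr; apply: eq_bigr => t _.
  have -> : fx (fx e0 t) e0 = t by rewrite fxC fxK.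
  by rewrite chi_fx -chi_T; ring.
rewrite /Lf walsh_orth ?mulr0 //.
have hJr : (#|J| <= r)%N by rewrite -[X in (_ <= X)%N](card_ord r) max_card.
have -> : #|~: J| = (r - #|J|)%N by rewrite cardsCs setCK card_ord.
move: hJ; rewrite /good; apply: contra => /andP[h2 /eqP h3].
apply/andP; split; first lia.
move: h3; rewrite !oddB //; last lia.
by case: (odd r); case: (odd #|J|); case: (odd ss).
Qed.

Lemma main_sec ss : (ss <= r - 3)%N ->
  [/\ inV p ss (fun n => msf p ss (Tr p n)),
      inV p ss (dft p (fun n => msf p ss (Tr p n))),
      (forall f : int -> algC, inV p ss f ->
         [/\ forall n, f (n + (2 * Pp p)%N%:Z) = f n,
             \sum_(l < (2 * Pp p)%N) f (l : nat)%:Z = 0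
           & forall n, f (- n) = (-1) ^+ (r - ss) * f n])
    & forall f : int -> algC, inV p ss f -> inV p ss (dft p f)].
Proof.
have _ := (r3, ppos, pcop, podd).
move=> hs0; have hs : (ss + 3 <= r)%N by lia.
have hm := msf_inV hs.
split => //.
- exact: dft_inV.
- move=> f hf; have [h1 _ h3 h4] := inV_props hs hf; split => //.
  move=> n; apply: h1; rewrite /cg.
  have -> : n + (2 * Pp p)%N%:Z - n = (2 * Pp p)%N%:Z by ring.
  exact: dvdzz.
- by move=> f; apply: dft_inV.
Qed.
End Main.

Theorem corollaryB12 (r : nat) (p : 'I_r -> nat) (s : nat) :
  (3 <= r)%N ->
  (forall j, (0 < p j)%N) ->
  (forall i j : 'I_r, i != j -> coprime (p i) (p j)) ->
  (forall j : 'I_r, (0 < (j : nat))%N -> odd (p j)) ->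
  (s <= r - 3)%N ->
  [/\ inV p s (fun n => msf p s (Tr p n)),
      inV p s (dft p (fun n => msf p s (Tr p n))),
      (forall f : int -> algC, inV p s f ->
         [/\ forall n, f (n + (2 * Pp p)%N%:Z) = f n,
             \sum_(l < (2 * Pp p)%N) f (l : nat)%:Z = 0
           & forall n, f (- n) = (-1) ^+ (r - s) * f n])
    & forall f : int -> algC, inV p s f -> inV p s (dft p f)].
Proof.
move=> h1 h2 h3 h4 h5.
exact: (@main_sec r p h1 h2 h3 h4 s h5).
Qed.
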